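(* Let $\mathbb{C}$ be a semi-abelian action accessible category, and let $X\xrightarrow{\kappa} A \underset{\beta}{\overset{\alpha}{\rightleftarrows}} B$ be a split extension in the category of internal reflexive graphs in $\mathbb{C}$. Then there exists a largest sub-reflexive-graph $\tilde B$ of $B$ such that $[{}_*\tilde B, X_*]=0=[\tilde B_*,{}_*X]$ in $\mathbb{C}$ (Huq commutators of subobjects of the underlying object of $A$, via $\kappa$ and $\beta$).
   Context: Semi-abelian: pointed, finitely complete and cocomplete, Barr-exact, Bourn-protomodular. A reflexive graph in $\mathbb{C}$ is a triple $(G,s,t)$ with $s,t\colon G\to G$, $st=t$, $ts=s$; morphisms are maps of underlying objects commuting with $s$ and $t$. A sub-reflexive-graph is a subobject in this category. For a reflexive graph $G$, ${}_*G$ denotes the kernel of $s$ and $G_*$ the kernel of $t$, as subobjects of $G$. A split extension is a diagram $X\xrightarrow{\kappa}A\rightleftarrows B$ with $\alpha\beta=1_B$ and $\kappa$ the kernel of $\alpha$. Two morphisms $f\colon P\to C$, $g\colon Q\to C$ commute (Huq) if there is $c\colon P\times Q\to C$ with $c(1,0)=f$, $c(0,1)=g$; the Huq commutator $[P,Q]$ of two subobjects of $C$ is the smallest normal subobject of $C$ such that the images of $P,Q$ in the quotient commute. A split extension with kernel $X$ is faithful if every split extension with kernel $X$ admits at most one morphism to it that is the identity on $X$; $\mathbb{C}$ is action accessible if every split extension with kernel $X$ admits a morphism (identity on $X$) to a faithful one. *)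

(* Defs.v *)
Set Implicit Arguments.
Unset Strict Implicit.

Record Cat := {
  ob :> Type;
  hom : ob -> ob -> Type;
  comp : forall a b c : ob, hom b c -> hom a b -> hom a c;
  idm : forall a : ob, hom a a;
  comp_assoc : forall a b c d (f : hom a b) (g : hom b c) (h : hom c d),
      comp h (comp g f) = comp (comp h g) f;
  comp_id_l : forall a b (f : hom a b), comp (idm b) f = f;
  comp_id_r : forall a b (f : hom a b), comp f (idm a) = f
}.
Arguments hom {c} _ _ : rename.
Arguments comp {c a b c0} _ _ : rename.
Arguments idm {c} a : rename.

Notation "g ∘ f" := (comp g f) (at level 40, left associativity).

Section CatDefs.
Variable C : Cat.

Definition is_iso {a b : C} (f : hom a b) : Prop :=
  exists g : hom b a, g ∘ f = idm a /\ f ∘ g = idm b.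

Definition mono {a b : C} (f : hom a b) : Prop :=
  forall (x : C) (g h : hom x a), f ∘ g = f ∘ h -> g = h.

Definition is_initial (I : C) : Prop :=
  forall x : C, exists f : hom I x, forall g : hom I x, g = f.
Definition is_terminal (T : C) : Prop :=
  forall x : C, exists f : hom x T, forall g : hom x T, g = f.
Definition is_zero (Z : C) : Prop := is_initial Z /\ is_terminal Z.

Definition pointed : Prop := exists Z : C, is_zero Z.

Definition zm {a b : C} (f : hom a b) : Prop :=
  exists (Z : C) (u : hom a Z) (v : hom Z b), is_zero Z /\ f = v ∘ u.

Definition is_pullback {P A B D : C} (p1 : hom P A) (p2 : hom P B)
    (f : hom A D) (g : hom B D) : Prop :=
  f ∘ p1 = g ∘ p2 /\
  forall (Q : C) (q1 : hom Q A) (q2 : hom Q B), f ∘ q1 = g ∘ q2 ->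
    exists u : hom Q P, p1 ∘ u = q1 /\ p2 ∘ u = q2 /\
      forall u' : hom Q P, p1 ∘ u' = q1 -> p2 ∘ u' = q2 -> u' = u.

Definition is_pushout {D A B P : C} (f : hom D A) (g : hom D B)
    (i1 : hom A P) (i2 : hom B P) : Prop :=
  i1 ∘ f = i2 ∘ g /\
  forall (Q : C) (q1 : hom A Q) (q2 : hom B Q), q1 ∘ f = q2 ∘ g ->
    exists u : hom P Q, u ∘ i1 = q1 /\ u ∘ i2 = q2 /\
      forall u' : hom P Q, u' ∘ i1 = q1 -> u' ∘ i2 = q2 -> u' = u.

Definition is_product {P Q PQ : C} (p1 : hom PQ P) (p2 : hom PQ Q) : Prop :=
  forall (Y : C) (f : hom Y P) (g : hom Y Q),
    exists u : hom Y PQ, p1 ∘ u = f /\ p2 ∘ u = g /\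
      forall u' : hom Y PQ, p1 ∘ u' = f -> p2 ∘ u' = g -> u' = u.

Definition finitely_complete : Prop :=
  (exists T : C, is_terminal T) /\
  forall (A B D : C) (f : hom A D) (g : hom B D),
    exists (P : C) (p1 : hom P A) (p2 : hom P B), is_pullback p1 p2 f g.

Definition finitely_cocomplete : Prop :=
  (exists I : C, is_initial I) /\
  forall (D A B : C) (f : hom D A) (g : hom D B),
    exists (P : C) (i1 : hom A P) (i2 : hom B P), is_pushout f g i1 i2.

Definition is_coequalizer {A B Q : C} (f g : hom A B) (q : hom B Q) : Prop :=
  q ∘ f = q ∘ g /\
  forall (Y : C) (h : hom B Y), h ∘ f = h ∘ g ->
    exists u : hom Q Y, u ∘ q = h /\ forall u' : hom Q Y, u' ∘ q = h -> u' = u.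

Definition regular_epi {B Q : C} (e : hom B Q) : Prop :=
  exists (A : C) (f g : hom A B), is_coequalizer f g e.

Definition regular : Prop :=
  (forall (A B P : C) (f : hom A B) (p1 p2 : hom P A), is_pullback p1 p2 f f ->
     exists (Q : C) (q : hom A Q), is_coequalizer p1 p2 q) /\
  (forall (A B D P : C) (e : hom A D) (g : hom B D) (p1 : hom P A) (p2 : hom P B),
     regular_epi e -> is_pullback p1 p2 e g -> regular_epi p2).

Definition jointly_monic {R A : C} (r1 r2 : hom R A) : Prop :=
  forall (Y : C) (g h : hom Y R), r1 ∘ g = r1 ∘ h -> r2 ∘ g = r2 ∘ h -> g = h.

Definition equivalence_relation {R A : C} (r1 r2 : hom R A) : Prop :=
  jointly_monic r1 r2 /\
  (exists d : hom A R, r1 ∘ d = idm A /\ r2 ∘ d = idm A) /\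
  (exists s : hom R R, r1 ∘ s = r2 /\ r2 ∘ s = r1) /\
  (forall (P : C) (p1 p2 : hom P R), is_pullback p1 p2 r2 r1 ->
     exists t : hom P R, r1 ∘ t = r1 ∘ p1 /\ r2 ∘ t = r2 ∘ p2).

Definition barr_exact : Prop :=
  regular /\
  forall (R A : C) (r1 r2 : hom R A), equivalence_relation r1 r2 ->
    exists (D : C) (f : hom A D), is_pullback r1 r2 f f.

Definition is_kernel {K A B : C} (k : hom K A) (f : hom A B) : Prop :=
  zm (f ∘ k) /\
  forall (Y : C) (g : hom Y A), zm (f ∘ g) ->
    exists u : hom Y K, k ∘ u = g /\ forall u' : hom Y K, k ∘ u' = g -> u' = u.

Definition is_cokernel {A B Q : C} (q : hom B Q) (f : hom A B) : Prop :=
  zm (q ∘ f) /\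
  forall (Y : C) (g : hom B Y), zm (g ∘ f) ->
    exists u : hom Q Y, u ∘ q = g /\ forall u' : hom Q Y, u' ∘ q = g -> u' = u.

Definition split_ext {X A B : C} (k : hom X A) (a : hom A B) (b : hom B A) : Prop :=
  a ∘ b = idm B /\ is_kernel k a.

(* (pointed) Bourn protomodularity: the split short five lemma *)
Definition protomodular : Prop :=
  forall (X A B X' A' B' : C) (k : hom X A) (a : hom A B) (b : hom B A)
    (k' : hom X' A') (a' : hom A' B') (b' : hom B' A')
    (u : hom X X') (v : hom A A') (w : hom B B'),
    split_ext k a b -> split_ext k' a' b' ->
    v ∘ k = k' ∘ u -> a' ∘ v = w ∘ a -> v ∘ b = b' ∘ w ->
    is_iso u -> is_iso w -> is_iso v.

Definition semi_abelian : Prop :=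
  pointed /\ finitely_complete /\ finitely_cocomplete /\ barr_exact /\ protomodular.

Definition ext_mor {X A B A' B' : C} (k : hom X A) (a : hom A B) (b : hom B A)
    (k' : hom X A') (a' : hom A' B') (b' : hom B' A')
    (v : hom A A') (w : hom B B') : Prop :=
  v ∘ k = k' /\ a' ∘ v = w ∘ a /\ v ∘ b = b' ∘ w.

Definition faithful_split_ext {X A' B' : C} (k' : hom X A') (a' : hom A' B')
    (b' : hom B' A') : Prop :=
  split_ext k' a' b' /\
  forall (A B : C) (k : hom X A) (a : hom A B) (b : hom B A),
    split_ext k a b ->
    forall (v v2 : hom A A') (w w2 : hom B B'),
      ext_mor k a b k' a' b' v w -> ext_mor k a b k' a' b' v2 w2 ->
      v = v2 /\ w = w2.

Definition action_accessible : Prop :=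
  forall (X A B : C) (k : hom X A) (a : hom A B) (b : hom B A),
    split_ext k a b ->
    exists (A' B' : C) (k' : hom X A') (a' : hom A' B') (b' : hom B' A')
      (v : hom A A') (w : hom B B'),
      faithful_split_ext k' a' b' /\ ext_mor k a b k' a' b' v w.

Definition huq_commute {P Q D : C} (f : hom P D) (g : hom Q D) : Prop :=
  exists (PQ : C) (p1 : hom PQ P) (p2 : hom PQ Q) (i1 : hom P PQ) (i2 : hom Q PQ)
    (c : hom PQ D),
    is_product p1 p2 /\
    p1 ∘ i1 = idm P /\ zm (p2 ∘ i1) /\ zm (p1 ∘ i2) /\ p2 ∘ i2 = idm Q /\
    c ∘ i1 = f /\ c ∘ i2 = g.

Definition normal_mono {N D : C} (n : hom N D) : Prop :=
  mono n /\ exists (E : C) (f : hom D E), is_kernel n f.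

Definition quot_commute {P Q N D : C} (p : hom P D) (q : hom Q D) (n : hom N D)
  : Prop :=
  forall (E : C) (c : hom D E), is_cokernel c n -> huq_commute (c ∘ p) (c ∘ q).

Definition is_huq_commutator {P Q N D : C} (p : hom P D) (q : hom Q D)
    (n : hom N D) : Prop :=
  normal_mono n /\ quot_commute p q n /\
  forall (N' : C) (n' : hom N' D), normal_mono n' -> quot_commute p q n' ->
    exists h : hom N N', n' ∘ h = n.

Definition huq_zero {P Q D : C} (p : hom P D) (q : hom Q D) : Prop :=
  exists (Z : C) (n : hom Z D), is_zero Z /\ is_huq_commutator p q n.

Record RG := {
  rg_ob : ob C;
  rg_s : hom rg_ob rg_ob;
  rg_t : hom rg_ob rg_ob;
  rg_st : rg_s ∘ rg_t = rg_t;
  rg_ts : rg_t ∘ rg_s = rg_s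
}.

Record rgHom (G H : RG) := {
  rgmap :> hom (rg_ob G) (rg_ob H);
  rgmap_s : rgmap ∘ rg_s G = rg_s H ∘ rgmap;
  rgmap_t : rgmap ∘ rg_t G = rg_t H ∘ rgmap
}.

(* kernels in the category of reflexive graphs (zero morphisms there are
   exactly those whose underlying morphism is zero) *)
Definition rg_kernel {X A B : RG} (k : rgHom X A) (a : rgHom A B) : Prop :=
  zm (rgmap a ∘ rgmap k) /\
  forall (Y : RG) (g : rgHom Y A), zm (rgmap a ∘ rgmap g) ->
    exists u : rgHom Y X, rgmap k ∘ rgmap u = rgmap g /\
      forall u' : rgHom Y X, rgmap k ∘ rgmap u' = rgmap g -> rgmap u' = rgmap u.

Definition rg_split_ext {X A B : RG} (k : rgHom X A) (a : rgHom A B)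
    (b : rgHom B A) : Prop :=
  rgmap a ∘ rgmap b = idm (rg_ob B) /\ rg_kernel k a.

Definition rg_mono {G H : RG} (m : rgHom G H) : Prop :=
  forall (Y : RG) (g h : rgHom Y G),
    rgmap m ∘ rgmap g = rgmap m ∘ rgmap h -> rgmap g = rgmap h.

(* for a sub-reflexive-graph m : Bt >-> B, with B embedded into A by b and
   X embedded into A by k:
   [ _*Bt , X_* ] = 0 = [ Bt_* , _*X ]  in C.
   _*G = kernel of s, G_* = kernel of t. *)
Definition comm_condition {X A B : RG} (k : rgHom X A) (b : rgHom B A)
    {Bt : RG} (m : rgHom Bt B) : Prop :=
  (forall (K1 K2 : C) (k1 : hom K1 (rg_ob Bt)) (k2 : hom K2 (rg_ob X)),
     is_kernel k1 (rg_s Bt) -> is_kernel k2 (rg_t X) ->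
     huq_zero (rgmap b ∘ rgmap m ∘ k1) (rgmap k ∘ k2)) /\
  (forall (K1 K2 : C) (k1 : hom K1 (rg_ob Bt)) (k2 : hom K2 (rg_ob X)),
     is_kernel k1 (rg_t Bt) -> is_kernel k2 (rg_s X) ->
     huq_zero (rgmap b ∘ rgmap m ∘ k1) (rgmap k ∘ k2)).

End CatDefs.

(* Main.v *)
Require Import Defs.
From Stdlib Require Import Setoid.
Set Implicit Arguments.
Unset Strict Implicit.

Lemma cl {C : Cat} {a b c d : C} {g : hom b c} {f : hom a b} {h : hom a c} :
  g ∘ f = h -> forall (x : hom c d), x ∘ g ∘ f = x ∘ h.
Proof. intros H x. rewrite <- comp_assoc, H. reflexivity. Qed.

Ltac nrm := rewrite ?comp_assoc, ?comp_id_l, ?comp_id_r.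
Ltac rw H := first [rewrite H | rewrite (cl H)]; nrm.

Section Basic.
Variable C : Cat.
Implicit Types a b c d e x Y K A B P Q Z PQ : C.

Lemma zm_comp_l a b c (f : hom a b) (g : hom b c) : zm f -> zm (g ∘ f).
Proof. intros (Z & u & v & HZ & ->). exists Z, u, (g ∘ v). split; auto. apply comp_assoc. Qed.
Lemma zm_comp_r a b c (f : hom a b) (g : hom c a) : zm f -> zm (f ∘ g).
Proof. intros (Z & u & v & HZ & ->). exists Z, (u ∘ g), v. split; auto. symmetry; apply comp_assoc. Qed.

Lemma zm_unique a b (f g : hom a b) : zm f -> zm g -> f = g.
Proof.
  intros (Z & u & v & [HZi HZt] & ->) (Z' & u' & v' & [HZi' HZt'] & ->).
  destruct (HZi Z') as [j Hj].
  destruct (HZi b) as [z Hz].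
  destruct (HZt' a) as [y Hy].
  rewrite (Hz v), <- (Hz (v' ∘ j)).
  rewrite <- comp_assoc. f_equal. rewrite (Hy u'), <- (Hy (j ∘ u)). reflexivity.
Qed.

Lemma zm_to_zero a Z (HZ : is_zero Z) (f : hom a Z) : zm f.
Proof. exists Z, f, (idm Z). split; auto. symmetry; apply comp_id_l. Qed.
Lemma zm_from_zero b Z (HZ : is_zero Z) (f : hom Z b) : zm f.
Proof. exists Z, (idm Z), f. split; auto. symmetry; apply comp_id_r. Qed.

Lemma zm_ex (HP : pointed C) a b : exists f : hom a b, zm f.
Proof.
  destruct HP as [Z [HZi HZt]]. destruct (HZi b) as [v _]. destruct (HZt a) as [u _].
  exists (v ∘ u), Z, u, v. split; [split|]; auto.
Qed.

Lemma mono_zm (HP : pointed C) a b c (m : hom b c) (f : hom a b) : mono m -> zm (m ∘ f) -> zm f.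
Proof.
  intros Hm H. destruct (zm_ex HP a b) as [z Hz].
  assert (f = z) as ->; auto. apply Hm. apply zm_unique; auto. apply zm_comp_l; auto.
Qed.

Lemma kernel_mono K A B (k : hom K A) (f : hom A B) : is_kernel k f -> mono k.
Proof.
  intros [H0 H] x g h E. destruct (H x (k ∘ g)) as [u [_ Hu]].
  { rewrite comp_assoc. apply zm_comp_r; auto. }
  rewrite (Hu g eq_refl), (Hu h (eq_sym E)). reflexivity.
Qed.

Lemma kernel_factor K A B Y (k : hom K A) (f : hom A B) (g : hom Y A) :
  is_kernel k f -> zm (f ∘ g) -> exists u, k ∘ u = g.
Proof. intros [_ H] Hg. destruct (H Y g Hg) as [u [Hu _]]. eauto. Qed.

Lemma mono_comp a b c (f : hom a b) (g : hom b c) : mono f -> mono g -> mono (g ∘ f).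
Proof. intros Hf Hg x u v E. apply Hf, Hg. rewrite !comp_assoc. exact E. Qed.

Lemma iso_mono a b (f : hom a b) : is_iso f -> mono f.
Proof. intros [g [H1 H2]] x u v E. rewrite <- (comp_id_l u), <- (comp_id_l v), <- H1, <- !comp_assoc, E. reflexivity. Qed.

Lemma iso_epi a b c (f : hom a b) (u v : hom b c) : is_iso f -> u ∘ f = v ∘ f -> u = v.
Proof. intros [g [H1 H2]] E. rewrite <- (comp_id_r u), <- (comp_id_r v), <- H2, !comp_assoc, E. reflexivity. Qed.

Lemma idm_iso a : is_iso (idm a).
Proof. exists (idm a). split; apply comp_id_l. Qed.

Lemma kernel_exists (HP : pointed C) (HF : finitely_complete C) A B (f : hom A B) :
  exists K (k : hom K A), is_kernel k f.
Proof.
  destruct HP as [Z HZ]. pose proof HZ as [HZi HZt]. destruct (HZi B) as [z _].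
  destruct HF as [_ HF]. destruct (HF A Z B f z) as (P & p1 & p2 & E & HU).
  exists P, p1. split.
  - rewrite E. apply zm_comp_r, zm_from_zero; auto.
  - intros Y g Hg. destruct (HZt Y) as [y Hy].
    destruct (HU Y g y) as (u & Hu1 & Hu2 & Hu3).
    { apply zm_unique; auto. apply zm_comp_r, zm_from_zero; auto. }
    exists u. split; [auto|]. intros u' Hu'. apply Hu3; auto.
Qed.

Lemma product_exists (HF : finitely_complete C) P Q : exists PQ (p1 : hom PQ P) (p2 : hom PQ Q), is_product p1 p2.
Proof.
  destruct HF as [[T HT] HF]. destruct (HT P) as [tp Htp]. destruct (HT Q) as [tq Htq].
  destruct (HF P Q T tp tq) as (PQ & p1 & p2 & E & HU).
  exists PQ, p1, p2. intros Y f g. apply HU.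
  destruct (HT Y) as [ty Hty]. rewrite (Hty (tp ∘ f)), (Hty (tq ∘ g)). reflexivity.
Qed.

Lemma product_uniq PQ P Q (p1 : hom PQ P) (p2 : hom PQ Q) Y (u v : hom Y PQ) :
  is_product p1 p2 -> p1 ∘ u = p1 ∘ v -> p2 ∘ u = p2 ∘ v -> u = v.
Proof.
  intros H E1 E2. destruct (H Y (p1 ∘ v) (p2 ∘ v)) as (w & _ & _ & Hw).
  rewrite (Hw u E1 E2), (Hw v eq_refl eq_refl). reflexivity.
Qed.

Definition is_eqz a b e (f g : hom a b) (m : hom e a) : Prop :=
  f ∘ m = g ∘ m /\ mono m /\ forall Y (y : hom Y a), f ∘ y = g ∘ y -> exists u, m ∘ u = y.

Lemma eqz_exists (HF : finitely_complete C) a b (f g : hom a b) : exists e (m : hom e a), is_eqz f g m.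
Proof.
  destruct (product_exists HF a b) as (AB & q1 & q2 & HAB).
  destruct (HAB a (idm a) f) as (h1 & H11 & H12 & _).
  destruct (HAB a (idm a) g) as (h2 & H21 & H22 & _).
  destruct HF as [_ HF]. destruct (HF a a AB h1 h2) as (P & p1 & p2 & E & HU).
  assert (E1 : p1 = p2).
  { assert (q1 ∘ h1 ∘ p1 = q1 ∘ h2 ∘ p2) as X by (rewrite <- !comp_assoc, E; reflexivity).
    rewrite H11, H21, !comp_id_l in X. exact X. }
  assert (E' : h1 ∘ p1 = h2 ∘ p1) by (rewrite E at 1; rewrite <- E1; reflexivity).
  exists P, p1. split; [|split].
  - assert (q2 ∘ h1 ∘ p1 = q2 ∘ h2 ∘ p1) as X by (rewrite <- !comp_assoc, E'; reflexivity).
    rewrite H12, H22 in X. exact X.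
  - intros x u v Euv. destruct (HU x (p1 ∘ v) (p1 ∘ v)) as (w & Hw1 & Hw2 & Hw3).
    { rewrite !comp_assoc, E'. reflexivity. }
    rewrite (Hw3 u), (Hw3 v); auto; rewrite <- ?E1; auto.
  - intros Y y Hy. destruct (HU Y y y) as (w & Hw1 & _).
    { apply (product_uniq HAB); nrm; rewrite ?H11, ?H21, ?H12, ?H22; nrm; auto. }
    eauto.
Qed.

End Basic.

Section Proto.
Variable C : Cat.
Implicit Types a b c d e x Y K A B P Q Z PQ S X : C.
Variable HP : pointed C.
Variable HF : finitely_complete C.
Variable HPM : protomodular C.

Lemma JE X A B Z (k : hom X A) (a : hom A B) (b : hom B A) (f g : hom A Z) :
  split_ext k a b -> f ∘ k = g ∘ k -> f ∘ b = g ∘ b -> f = g.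
Proof.
  intros [Hab Hk] Ek Eb.
  destruct (eqz_exists HF f g) as (E & e & He1 & He2 & He3).
  destruct (He3 _ k Ek) as [kE HkE]. destruct (He3 _ b Eb) as [bE HbE].
  assert (Hs : split_ext kE (a ∘ e) bE).
  { split.
    - rewrite <- comp_assoc, HbE. exact Hab.
    - split.
      + rewrite <- comp_assoc, HkE. apply Hk.
      + intros Y y Hy. destruct (kernel_factor Hk (g := e ∘ y)) as [u Hu].
        { rewrite comp_assoc. exact Hy. }
        exists u. split.
        * apply He2. rewrite comp_assoc, HkE. exact Hu.
        * intros u' Hu'. apply (kernel_mono Hk). rewrite Hu, <- Hu', comp_assoc, HkE. reflexivity. }
  assert (Hi : is_iso e).
  { apply (HPM (u := idm X) (w := idm B) Hs (conj Hab Hk)).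
    - rewrite comp_id_r. exact HkE.
    - rewrite comp_id_l. reflexivity.
    - rewrite comp_id_r. exact HbE.
    - apply idm_iso.
    - apply idm_iso. }
  destruct Hi as [e' [H1 H2]].
  rewrite <- (comp_id_r f), <- (comp_id_r g), <- H2, !comp_assoc, He1. reflexivity.
Qed.

Lemma product_split P Q PQ (p1 : hom PQ P) (p2 : hom PQ Q) (i1 : hom P PQ) (i2 : hom Q PQ) :
  is_product p1 p2 -> p1 ∘ i1 = idm P -> zm (p2 ∘ i1) -> zm (p1 ∘ i2) -> p2 ∘ i2 = idm Q ->
  split_ext i2 p1 i1.
Proof.
  intros Hp H11 H21 H12 H22. split; auto. split; auto.
  intros Y y Hy. exists (p2 ∘ y). split.
  - apply (product_uniq Hp).
    + rewrite comp_assoc. apply zm_unique; auto. apply zm_comp_r; auto.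
    + rewrite comp_assoc, H22, comp_id_l. reflexivity.
  - intros u' Hu'. rewrite <- Hu', comp_assoc, H22, comp_id_l. reflexivity.
Qed.

Lemma ext_mor_comp X A B A' B' A'' B'' (k : hom X A) (a : hom A B) (b : hom B A)
  (k' : hom X A') (a' : hom A' B') (b' : hom B' A')
  (k'' : hom X A'') (a'' : hom A'' B'') (b'' : hom B'' A'')
  v w v' w' : ext_mor k a b k' a' b' v w -> ext_mor k' a' b' k'' a'' b'' v' w' ->
  ext_mor k a b k'' a'' b'' (v' ∘ v) (w' ∘ w).
Proof.
  intros (E1 & E2 & E3) (F1 & F2 & F3). split; [|split].
  - rewrite <- comp_assoc, E1. exact F1.
  - rewrite comp_assoc, F2, <- comp_assoc, E2, comp_assoc. reflexivity.
  - rewrite <- comp_assoc, E3, comp_assoc, F3, comp_assoc. reflexivity.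
Qed.

Lemma huq_comp_l P Q D E (p : hom P D) (q : hom Q D) (c : hom D E) :
  huq_commute p q -> huq_commute (c ∘ p) (c ∘ q).
Proof.
  intros (PQ & p1 & p2 & i1 & i2 & φ & H1 & H2 & H3 & H4 & H5 & H6 & H7).
  exists PQ, p1, p2, i1, i2, (c ∘ φ). repeat split; auto.
  - rewrite <- comp_assoc, H6. reflexivity.
  - rewrite <- comp_assoc, H7. reflexivity.
Qed.

Lemma huq_precomp_r P Q Q' D (p : hom P D) (q : hom Q D) (h : hom Q' Q) :
  huq_commute p q -> huq_commute p (q ∘ h).
Proof.
  intros (PQ & p1 & p2 & i1 & i2 & φ & H1 & H2 & H3 & H4 & H5 & H6 & H7).
  destruct (product_exists HF P Q') as (PQ' & r1 & r2 & Hr).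
  destruct (zm_ex HP P Q') as [z1 Hz1]. destruct (zm_ex HP Q' P) as [z2 Hz2].
  destruct (Hr P (idm P) z1) as (j1 & J11 & J12 & _).
  destruct (Hr Q' z2 (idm Q')) as (j2 & J21 & J22 & _).
  destruct (H1 PQ' r1 (h ∘ r2)) as (θ & T1 & T2 & _).
  exists PQ', r1, r2, j1, j2, (φ ∘ θ). repeat split; auto.
  - rewrite J12; auto.
  - rewrite J21; auto.
  - rewrite <- comp_assoc. replace (θ ∘ j1) with i1. exact H6.
    apply (product_uniq H1).
    + rewrite comp_assoc, T1, J11, H2. reflexivity.
    + rewrite comp_assoc, T2, <- comp_assoc, J12. apply zm_unique; auto.
      apply zm_comp_l; auto.
  - rewrite <- comp_assoc. replace (θ ∘ j2) with (i2 ∘ h). rewrite comp_assoc, H7. reflexivity.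
    apply (product_uniq H1).
    + rewrite !comp_assoc, T1, J21. apply zm_unique; auto.
      apply zm_comp_r; auto.
    + rewrite !comp_assoc, T2, <- (comp_assoc j2 r2 h), J22, H5. nrm. reflexivity.
Qed.

Lemma huq_zero_of_commute P Q D (p : hom P D) (q : hom Q D) :
  huq_commute p q -> huq_zero p q.
Proof.
  intros H. destruct HP as [Z HZ]. pose proof HZ as [HZi HZt].
  destruct (HZi D) as [n Hn]. exists Z, n. split; [|split; [|split]]; auto.
  - split.
    + intros x g h _. destruct (HZt x) as [y Hy]. rewrite (Hy g), (Hy h). reflexivity.
    + exists D, (idm D). split.
      * rewrite comp_id_l. apply zm_from_zero; auto.
      * intros Y g Hg. destruct (HZt Y) as [y Hy]. exists y. split.
        -- apply zm_unique. apply zm_comp_r, zm_from_zero; auto. rewrite comp_id_l in Hg; auto.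
        -- intros u' _. apply Hy.
  - intros E c _. apply huq_comp_l; auto.
  - intros N' n' _ _. destruct (HZi N') as [h _]. exists h. rewrite (Hn (n' ∘ h)). symmetry. apply Hn.
Qed.

Lemma commute_of_huq_zero P Q D (p : hom P D) (q : hom Q D) :
  huq_zero p q -> huq_commute p q.
Proof.
  intros (Z & n & HZ & _ & Hq & _).
  specialize (Hq D (idm D)). rewrite !comp_id_l in Hq. apply Hq.
  split.
  - rewrite comp_id_l. apply zm_from_zero; auto.
  - intros Y g _. exists g. split.
    + apply comp_id_r.
    + intros u' Hu'. rewrite comp_id_r in Hu'. exact Hu'.
Qed.

End Proto.

Section Central.
Variable C : Cat.
Implicit Types a b c d e x Y K A B P Q Z PQ S X : C.
Variable HP : pointed C.
Variable HF : finitely_complete C.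
Variable HPM : protomodular C.
Variable HAA : action_accessible C.

Lemma centralizer X A B (k : hom X A) (a : hom A B) (b : hom B A)
  (Hab : a ∘ b = idm B) (Hk : is_kernel k a)
  (τX : hom X X) (τA : hom A A) (τB : hom B B)
  (HkX : τA ∘ k = k ∘ τX) (Hb : τA ∘ b = b ∘ τB) (Ha : a ∘ τA = τB ∘ a)
  K2 (κ : hom K2 X) (Hκ : is_kernel κ τX) :
  exists B' (w : hom B B'), forall S (f : hom S B),
    huq_commute (b ∘ f) (k ∘ κ) <-> zm (w ∘ f).
Proof.
  assert (Zk : zm (τA ∘ (k ∘ κ))).
  { rewrite comp_assoc, HkX, <- comp_assoc. apply zm_comp_l, Hκ. }
  assert (Zak : zm (a ∘ (k ∘ κ))).
  { rewrite comp_assoc. apply zm_comp_r, Hk. }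
  destruct (eqz_exists HF τA (b ∘ a ∘ τA)) as (A1 & e1 & He1 & Hm & Hf).
  destruct (Hf B b) as [b1 Hb1].
  { rewrite <- comp_assoc, Hb, comp_assoc, <- (comp_assoc b a b), Hab. nrm. reflexivity. }
  destruct (Hf K2 (k ∘ κ)) as [k1 Hk1].
  { apply zm_unique; auto. rewrite <- comp_assoc. apply zm_comp_l; auto. }
  assert (Hs : split_ext k1 (a ∘ e1) b1).
  { split.
    - rewrite <- comp_assoc, Hb1. exact Hab.
    - split.
      + rewrite <- comp_assoc, Hk1. exact Zak.
      + intros Y g Hg. destruct (kernel_factor Hk (g := e1 ∘ g)) as [u Hu].
        { rewrite comp_assoc. exact Hg. }
        destruct (kernel_factor Hκ (g := u)) as [u2 Hu2].
        { apply (mono_zm HP (kernel_mono Hk)).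
          assert (E : k ∘ (τX ∘ u) = b ∘ τB ∘ (a ∘ e1 ∘ g)).
          { rewrite comp_assoc, <- HkX, <- comp_assoc, Hu, comp_assoc, He1.
            rewrite <- (comp_assoc τA a b), Ha. nrm. reflexivity. }
          rewrite E. apply zm_comp_l. exact Hg. }
        assert (Hku2 : k1 ∘ u2 = g).
        { apply Hm. rewrite comp_assoc, Hk1, <- (comp_assoc u2 κ k), Hu2. exact Hu. }
        exists u2. split; auto.
        intros u' Hu'. apply (kernel_mono Hκ). apply (kernel_mono Hk).
        rewrite !comp_assoc, <- Hk1, <- !comp_assoc, Hu', Hku2. reflexivity. }
  destruct (HAA Hs) as (A' & B' & k' & a' & b' & v & w & [[Hab' Hk'] Hfaith] & Hmor).
  pose proof Hmor as (Hm1 & Hm2 & Hm3).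
  exists B', w. intros S f. split.
  -
    intros (PQ & p1 & p2 & i1 & i2 & φ & H1 & H2 & H3 & H4 & H5 & H6 & H7).
    pose proof (product_split H1 H2 H3 H4 H5) as Hsp.
    assert (Eφ : τA ∘ φ = b ∘ a ∘ τA ∘ φ).
    { apply (JE HF HPM Hsp).
      - rewrite <- !comp_assoc, H7. apply zm_unique; [exact Zk|]. apply zm_comp_l, zm_comp_l, Zk.
      - rewrite <- !comp_assoc, H6. nrm. rw Hb. rw Hb. rw Hab. reflexivity. }
    destruct (Hf PQ φ Eφ) as [V HV].
    assert (M : ext_mor i2 p1 i1 k1 (a ∘ e1) b1 V f).
    { split; [|split].
      - apply Hm. rewrite comp_assoc, HV, H7, Hk1. reflexivity.
      - apply (JE HF HPM Hsp).
        + rewrite <- !comp_assoc, (comp_assoc i2 V e1), HV, H7. apply zm_unique; auto.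
          apply zm_comp_l; auto.
        + rewrite <- !comp_assoc, (comp_assoc i1 V e1), HV, H6, H2, comp_id_r, comp_assoc, Hab, comp_id_l.
          reflexivity.
      - apply Hm. rewrite comp_assoc, HV, H6, comp_assoc, Hb1. reflexivity. }
    pose proof (ext_mor_comp M Hmor) as M1.
    destruct (zm_ex HP S B') as [z Hz].
    assert (M2 : ext_mor i2 p1 i1 k' a' b' (k' ∘ p2) z).
    { split; [|split].
      - rewrite <- comp_assoc, H5, comp_id_r. reflexivity.
      - apply zm_unique. rewrite comp_assoc. apply zm_comp_r, Hk'. apply zm_comp_r; auto.
      - apply zm_unique. rewrite <- comp_assoc. apply zm_comp_l; auto. apply zm_comp_l; auto. }
    destruct (Hfaith _ _ _ _ _ Hsp _ _ _ _ M1 M2) as [_ Ew].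
    rewrite Ew. exact Hz.
  -
    intros Hz.
    destruct HF as [_ HPB].
    destruct (HPB A1 S B (a ∘ e1) f) as (P & pP & pS & EP & HU).
    destruct (zm_ex HP K2 S) as [z0 Hz0].
    destruct (zm_ex HP S K2) as [z2 Hz2].
    destruct (HU K2 k1 z0) as (kP & HkP1 & HkP2 & _).
    { apply zm_unique. apply Hs. apply zm_comp_l; auto. }
    destruct (HU S (b1 ∘ f) (idm S)) as (σP & Hσ1 & Hσ2 & _).
    { rewrite comp_assoc, <- (comp_assoc b1 e1 a), Hb1, Hab. nrm. reflexivity. }
    destruct (kernel_factor Hk' (g := v ∘ pP)) as [r Hr].
    { rewrite comp_assoc, Hm2, <- comp_assoc, EP, comp_assoc. apply zm_comp_r; auto. }
    assert (Hrk : r ∘ kP = idm K2).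
    { apply (kernel_mono Hk'). rewrite comp_assoc, Hr, <- comp_assoc, HkP1, Hm1. nrm. reflexivity. }
    assert (Hrσ : zm (r ∘ σP)).
    { apply (mono_zm HP (kernel_mono Hk')). rewrite comp_assoc, Hr, <- comp_assoc, Hσ1, comp_assoc, Hm3.
      rewrite <- comp_assoc. apply zm_comp_l; auto. }
    assert (HsP : split_ext kP pS σP).
    { split; auto. split.
      - rewrite HkP2; auto.
      - intros Y y Hy. destruct (kernel_factor (proj2 Hs) (g := pP ∘ y)) as [u Hu].
        { rewrite comp_assoc, EP, <- comp_assoc. apply zm_comp_l; auto. }
        exists u. split.
        + destruct (HU Y (pP ∘ y) (pS ∘ y)) as (u0 & _ & _ & Hu0).
          { rewrite !comp_assoc, EP. reflexivity. }
          rewrite (Hu0 y eq_refl eq_refl). apply Hu0.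
          * rewrite comp_assoc, HkP1. exact Hu.
          * rewrite comp_assoc, HkP2. apply zm_unique; auto. apply zm_comp_r; auto.
        + intros u' Hu'. apply (kernel_mono (proj2 Hs)). rewrite Hu, <- Hu', comp_assoc, HkP1. reflexivity. }
    destruct (product_exists (conj (proj1 HF) HPB) S K2) as (PQ & p1 & p2 & Hpr).
    destruct (Hpr S (idm S) z2) as (i1 & I11 & I12 & _).
    destruct (Hpr K2 z0 (idm K2)) as (i2 & I21 & I22 & _).
    destruct (Hpr P pS r) as (θ & T1 & T2 & _).
    assert (Hsp : split_ext i2 p1 i1).
    { apply (product_split Hpr); auto; [rewrite I12 | rewrite I21]; auto. }
    assert (Tk : θ ∘ kP = i2).
    { apply (product_uniq Hpr).
      - rewrite comp_assoc, T1, HkP2, I21. reflexivity.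
      - rewrite comp_assoc, T2, Hrk, I22. reflexivity. }
    assert (Tσ : θ ∘ σP = i1).
    { apply (product_uniq Hpr).
      - rewrite comp_assoc, T1, Hσ2, I11. reflexivity.
      - rewrite comp_assoc, T2, I12. apply zm_unique; auto. }
    assert (Hiso : is_iso θ).
    { apply (HPM (u := idm K2) (w := idm S) HsP Hsp).
      - rewrite comp_id_r. exact Tk.
      - rewrite comp_id_l. exact T1.
      - rewrite comp_id_r. exact Tσ.
      - apply idm_iso.
      - apply idm_iso. }
    destruct Hiso as [θ' [Hθ1 Hθ2]].
    exists PQ, p1, p2, i1, i2, (e1 ∘ pP ∘ θ'). repeat split; auto.
    + rewrite I12; auto.
    + rewrite I21; auto.
    + rewrite <- Tσ. nrm. rw Hθ1. rw Hσ1. rw Hb1. reflexivity.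
    + rewrite <- Tk. nrm. rw Hθ1. rw HkP1. rw Hk1. reflexivity.
Qed.

End Central.

Section RGfacts.
Variable C : Cat.
Implicit Types a b c d e x Y K A B P Q Z PQ S X : C.
Variable HP : pointed C.
Variable HF : finitely_complete C.
Variable HPM : protomodular C.

Lemma rg_ss (G : RG C) : rg_s G ∘ rg_s G = rg_s G.
Proof. rewrite <- (rg_ts G) at 2. rewrite comp_assoc, rg_st, rg_ts. reflexivity. Qed.
Lemma rg_tt (G : RG C) : rg_t G ∘ rg_t G = rg_t G.
Proof. rewrite <- (rg_st G) at 2. rewrite comp_assoc, rg_ts, rg_st. reflexivity. Qed.

Lemma JE_idem G Z K (s : hom G G) (k : hom K G) (f g : hom G Z) :
  s ∘ s = s -> is_kernel k s -> f ∘ k = g ∘ k -> f ∘ s = g ∘ s -> f = g.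
Proof.
  intros Hss Hk Ek Es.
  destruct (eqz_exists HF s (idm G)) as (I & σ & Hσ1 & Hσ2 & Hσ3).
  destruct (Hσ3 G s) as [q Hq]. { rewrite Hss, comp_id_l. reflexivity. }
  assert (Hqσ : q ∘ σ = idm I).
  { apply Hσ2. rewrite comp_assoc, Hq, Hσ1. nrm. reflexivity. }
  assert (Hs : split_ext k q σ).
  { split; auto. split.
    - apply (mono_zm HP Hσ2). rewrite comp_assoc, Hq. apply Hk.
    - intros Y y Hy. destruct (kernel_factor Hk (g := y)) as [u Hu].
      { rewrite <- Hq, <- comp_assoc. apply zm_comp_l; auto. }
      exists u. split; auto. intros u' Hu'. apply (kernel_mono Hk). rewrite Hu, Hu'. reflexivity. }
  apply (JE HF HPM Hs); auto.
  assert (E : σ = s ∘ σ) by (rewrite Hσ1; nrm; reflexivity).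
  rewrite E, !comp_assoc, Es. reflexivity.
Qed.

Definition rg_idh (G : RG C) : rgHom G G.
Proof. refine (@Build_rgHom C G G (idm _) _ _); nrm; reflexivity. Defined.

Definition rg_comph (G H K : RG C) (g : rgHom H K) (f : rgHom G H) : rgHom G K.
Proof.
  refine (@Build_rgHom C G K (rgmap g ∘ rgmap f) _ _).
  - rewrite <- comp_assoc, (rgmap_s f), comp_assoc, (rgmap_s g), comp_assoc. reflexivity.
  - rewrite <- comp_assoc, (rgmap_t f), comp_assoc, (rgmap_t g), comp_assoc. reflexivity.
Defined.

Lemma rg_kernel_C (X A B : RG C) (k : rgHom X A) (a : rgHom A B) :
  rg_kernel k a -> is_kernel (rgmap k) (rgmap a).
Proof.
  intros [Hz Hu].
  destruct (kernel_exists HP HF (rgmap a)) as (K & κ & Hκ).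
  destruct (kernel_factor Hκ (g := rg_s A ∘ κ)) as [sK HsK].
  { rewrite comp_assoc, (rgmap_s a), <- comp_assoc. apply zm_comp_l, Hκ. }
  destruct (kernel_factor Hκ (g := rg_t A ∘ κ)) as [tK HtK].
  { rewrite comp_assoc, (rgmap_t a), <- comp_assoc. apply zm_comp_l, Hκ. }
  assert (st : sK ∘ tK = tK).
  { apply (kernel_mono Hκ). rewrite comp_assoc, HsK, <- comp_assoc, HtK, comp_assoc, rg_st. try reflexivity; exact (eq_sym HtK). }
  assert (ts : tK ∘ sK = sK).
  { apply (kernel_mono Hκ). rewrite comp_assoc, HtK, <- comp_assoc, HsK, comp_assoc, rg_ts. try reflexivity; exact (eq_sym HsK). }
  pose (KR := @Build_RG C K sK tK st ts).
  pose (κR := @Build_rgHom C KR A κ HsK HtK).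
  destruct (Hu KR κR (proj1 Hκ)) as [u [Hu1 _]]. simpl in Hu1.
  destruct (kernel_factor Hκ (g := rgmap k) Hz) as [v Hv].
  assert (vs : v ∘ rg_s X = rg_s KR ∘ v).
  { apply (kernel_mono Hκ). simpl. rewrite comp_assoc, Hv, comp_assoc, HsK, <- comp_assoc, Hv. apply rgmap_s. }
  assert (vt : v ∘ rg_t X = rg_t KR ∘ v).
  { apply (kernel_mono Hκ). simpl. rewrite comp_assoc, Hv, comp_assoc, HtK, <- comp_assoc, Hv. apply rgmap_t. }
  pose (vR := @Build_rgHom C X KR v vs vt).
  destruct (Hu X k Hz) as [u0 [_ Hu0]].
  assert (Huv : rgmap u ∘ v = idm (rg_ob X)).
  { transitivity (rgmap u0).
    - apply (Hu0 (rg_comph u vR)). simpl. rewrite comp_assoc, Hu1. exact Hv.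
    - symmetry. apply (Hu0 (rg_idh X)). simpl. apply comp_id_r. }
  assert (Hkm : mono (rgmap k)).
  { intros x g h E. rewrite <- (comp_id_l g), <- (comp_id_l h), <- Huv, <- !comp_assoc. f_equal.
    apply (kernel_mono Hκ). rewrite !comp_assoc. change (κ ∘ v ∘ g = κ ∘ v ∘ h). rewrite Hv. exact E. }
  split; auto.
  intros Y g Hg. destruct (kernel_factor Hκ Hg) as [g0 Hg0].
  assert (Hu1' : forall Y (y : hom Y K), rgmap k ∘ (rgmap u ∘ y) = κ ∘ y).
  { intros Y' y. rewrite comp_assoc. exact (f_equal (fun z => z ∘ y) Hu1). }
  exists (rgmap u ∘ g0). split.
  - exact (eq_trans (Hu1' _ g0) Hg0).
  - intros u' Hu'. apply Hkm. rewrite Hu'. exact (eq_sym (eq_trans (Hu1' _ g0) Hg0)).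
Qed.

End RGfacts.

Theorem lemma2p2 (C : Cat) (HC : semi_abelian C) (HAA : action_accessible C)
  (X A B : RG C) (k : rgHom X A) (a : rgHom A B) (b : rgHom B A)
  (HE : rg_split_ext k a b) :
  exists (Bt : RG C) (m : rgHom Bt B),
    rg_mono m /\ comm_condition k b m /\
    forall (Bt' : RG C) (m' : rgHom Bt' B),
      rg_mono m' -> comm_condition k b m' ->
      exists h : rgHom Bt' Bt, rgmap m ∘ rgmap h = rgmap m'.
Proof.
  destruct HC as (HP & HF & _ & _ & HPM).
  destruct HE as [Hab Hrk].
  pose proof (rg_kernel_C HP HF Hrk) as Hk.
  destruct (kernel_exists HP HF (rg_t X)) as (Kt & κt & Hκt).
  destruct (kernel_exists HP HF (rg_s X)) as (Ks & κs & Hκs).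
  destruct (centralizer HP HF HPM HAA Hab Hk (τX := rg_t X) (τA := rg_t A) (τB := rg_t B)
     (eq_sym (rgmap_t k)) (eq_sym (rgmap_t b)) (rgmap_t a) Hκt) as (B1 & w1 & Hw1).
  destruct (centralizer HP HF HPM HAA Hab Hk (τX := rg_s X) (τA := rg_s A) (τB := rg_s B)
     (eq_sym (rgmap_s k)) (eq_sym (rgmap_s b)) (rgmap_s a) Hκs) as (B2 & w2 & Hw2).
  set (sB := rg_s B). set (tB := rg_t B).
  destruct (eqz_exists HF w1 (w1 ∘ sB)) as (Ea & ea & Hea1 & Hea2 & Hea3).
  destruct (eqz_exists HF (w2 ∘ ea) (w2 ∘ tB ∘ ea)) as (Eb & eb & Heb1 & Heb2 & Heb3).
  set (m0 := ea ∘ eb).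
  assert (Hm0 : mono m0) by (apply mono_comp; auto).
  assert (F1 : w1 ∘ m0 = w1 ∘ sB ∘ m0) by (unfold m0; rewrite !comp_assoc, Hea1; reflexivity).
  assert (F2 : w2 ∘ m0 = w2 ∘ tB ∘ m0) by (unfold m0; rewrite !comp_assoc, Heb1; reflexivity).
  assert (Ffac : forall Y (y : hom Y (rg_ob B)), w1 ∘ y = w1 ∘ sB ∘ y -> w2 ∘ y = w2 ∘ tB ∘ y ->
            exists u, m0 ∘ u = y).
  { intros Y y H1 H2. destruct (Hea3 Y y H1) as [y1 Hy1].
    destruct (Heb3 Y y1) as [y2 Hy2].
    { rewrite <- !comp_assoc, Hy1. rewrite !comp_assoc. exact H2. }
    exists y2. unfold m0. rewrite <- comp_assoc, Hy2. exact Hy1. }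
  assert (Hss : sB ∘ sB = sB) by apply rg_ss.
  assert (Htt : tB ∘ tB = tB) by apply rg_tt.
  assert (Hst : sB ∘ tB = tB) by apply rg_st.
  assert (Hts : tB ∘ sB = sB) by apply rg_ts.
  destruct (Ffac _ (sB ∘ m0)) as [sb Hsb].
  { nrm. rw Hss. reflexivity. }
  { nrm. rw Hts. reflexivity. }
  destruct (Ffac _ (tB ∘ m0)) as [tb Htb].
  { nrm. rw Hst. reflexivity. }
  { nrm. rw Htt. reflexivity. }
  assert (st : sb ∘ tb = tb).
  { apply Hm0. rewrite comp_assoc, Hsb, <- comp_assoc, Htb, comp_assoc, Hst. try reflexivity; exact (eq_sym Htb). }
  assert (ts : tb ∘ sb = sb).
  { apply Hm0. rewrite comp_assoc, Htb, <- comp_assoc, Hsb, comp_assoc, Hts. try reflexivity; exact (eq_sym Hsb). }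
  pose (Bt := @Build_RG C Eb sb tb st ts).
  pose (m := @Build_rgHom C Bt B m0 Hsb Htb).
  exists Bt, m. subst m Bt. simpl. split; [|split].
  - intros Y g h E. apply Hm0. exact E.
  - split.
    + intros K1 K2 k1 k2 Hk1 Hk2. apply (huq_zero_of_commute HP).
      destruct (kernel_factor Hκt (g := k2) (proj1 Hk2)) as [h Hh].
      rewrite <- Hh, comp_assoc. apply (huq_precomp_r HP HF).
      rewrite <- comp_assoc. apply Hw1.
      simpl. rewrite comp_assoc, F1, <- (comp_assoc m0 sB w1), <- Hsb. nrm.
      rewrite <- comp_assoc. apply zm_comp_l. exact (proj1 Hk1).
    + intros K1 K2 k1 k2 Hk1 Hk2. apply (huq_zero_of_commute HP).
      destruct (kernel_factor Hκs (g := k2) (proj1 Hk2)) as [h Hh].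
      rewrite <- Hh, comp_assoc. apply (huq_precomp_r HP HF).
      rewrite <- comp_assoc. apply Hw2.
      simpl. rewrite comp_assoc, F2, <- (comp_assoc m0 tB w2), <- Htb. nrm.
      rewrite <- comp_assoc. apply zm_comp_l. exact (proj1 Hk1).
  - intros Bt' m' _ [Hc1 Hc2].
    destruct (kernel_exists HP HF (rg_s Bt')) as (K1 & k1 & Hk1).
    destruct (kernel_exists HP HF (rg_t Bt')) as (K2 & k2 & Hk2).
    assert (G1 : w1 ∘ m' = w1 ∘ sB ∘ m').
    { apply (JE_idem HP HF HPM (rg_ss Bt') Hk1).
      - apply zm_unique.
        + rewrite <- comp_assoc. apply Hw1. rewrite comp_assoc. apply (commute_of_huq_zero (Hc1 _ _ _ _ Hk1 Hκt)).
        + rewrite <- !comp_assoc, (comp_assoc k1 m' sB). unfold sB. rewrite <- (rgmap_s m').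
          rewrite <- comp_assoc. apply zm_comp_l, zm_comp_l, (proj1 Hk1).
      - rewrite <- !comp_assoc. unfold sB. rewrite (rgmap_s m'). nrm. rw (rg_ss B). reflexivity. }
    assert (G2 : w2 ∘ m' = w2 ∘ tB ∘ m').
    { apply (JE_idem HP HF HPM (rg_tt Bt') Hk2).
      - apply zm_unique.
        + rewrite <- comp_assoc. apply Hw2. rewrite comp_assoc. apply (commute_of_huq_zero (Hc2 _ _ _ _ Hk2 Hκs)).
        + rewrite <- !comp_assoc, (comp_assoc k2 m' tB). unfold tB. rewrite <- (rgmap_t m').
          rewrite <- comp_assoc. apply zm_comp_l, zm_comp_l, (proj1 Hk2).
      - rewrite <- !comp_assoc. unfold tB. rewrite (rgmap_t m'). nrm. rw (rg_tt B). reflexivity. }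
    destruct (Ffac _ (rgmap m') G1 G2) as [u Hu].
    assert (us : u ∘ rg_s Bt' = sb ∘ u).
    { apply Hm0. simpl. rewrite comp_assoc, Hu, comp_assoc, Hsb, <- comp_assoc, Hu. apply rgmap_s. }
    assert (ut : u ∘ rg_t Bt' = tb ∘ u).
    { apply Hm0. simpl. rewrite comp_assoc, Hu, comp_assoc, Htb, <- comp_assoc, Hu. apply rgmap_t. }
    exists (@Build_rgHom C Bt' (@Build_RG C Eb sb tb st ts) u us ut). simpl. exact Hu.
Qed.
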